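(* Let $P,A_I,A_O,B_I,B_O,F$ be finite-dimensional Hilbert spaces with $\dim A_I=\dim A_O=\dim B_I=\dim B_O=d$ and $\dim P=\dim F=D$, and let $U:P\otimes A_O\otimes B_O\to A_I\otimes B_I\otimes F$ be a unitary operator representing a direct sum of pure combs with two slots $A$ and $B$. (1) If $D=d$, then $U$ is causally ordered, and either $U=U_0^{P\to A_I}\otimes U_1^{A_O\to B_I}\otimes U_2^{B_O\to F}$ for some unitaries $U_0:P\to A_I$, $U_1:A_O\to B_I$, $U_2:B_O\to F$, or $U=V_0^{P\to B_I}\otimes V_1^{B_O\to A_I}\otimes V_2^{A_O\to F}$ for some unitaries $V_0:P\to B_I$, $V_1:B_O\to A_I$, $V_2:A_O\to F$. (2) If $D=2d$, then either $U$ is causally ordered, or there are tensor decompositions $P=P_c\otimes P_t$, $F=F_c\otimes F_t$ with $\dim P_c=\dim F_c=2$, $\dim P_t=\dim F_t=d$, orthonormal bases $\{|0\rangle,|1\rangle\}$ of $P_c$ and of $F_c$, and unitaries $U_0:P_t\to A_I$, $U_1:A_O\to B_I$, $U_2:B_O\to F_t$, $V_0:P_t\to B_I$, $V_1:B_O\to A_I$, $V_2:A_O\to F_t$ such that $$U=|0\rangle^{F_c}\langle0|^{P_c}\otimes U_0^{P_t\to A_I}\otimes U_1^{A_O\to B_I}\otimes U_2^{B_O\to F_t}+|1\rangle^{F_c}\langle1|^{P_c}\otimes V_0^{P_t\to B_I}\otimes V_1^{B_O\to A_I}\otimes V_2^{A_O\to F_t}.$$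
   Context: Choi vector of $X:\mathcal{H}_I\to\mathcal{H}_O$: $|X\rangle\rangle=\sum_i|i\rangle\otimes X|i\rangle$. A unitary $V:P'\otimes A_O\otimes B_O\to A_I\otimes B_I\otimes F'$ represents the two-slot supermap (slots $A$: $A_I\to A_O$, $B$: $B_I\to B_O$, global past $P'$, global future $F'$) with Choi operator $|V\rangle\rangle\langle\langle V|$. It represents a quantum comb of $A\prec B$ if this Choi operator $W\ge0$ satisfies $\mathrm{Tr}_{F'}W=1^{B_O}\otimes R_2$, $\mathrm{Tr}_{B_I}R_2=1^{A_O}\otimes R_1$, $\mathrm{Tr}_{A_I}R_1=1^{P'}$ for some $R_2,R_1$ (realizable by a circuit using $A$ before $B$); comb of $B\prec A$ with $A,B$ exchanged. ''$U$ is causally ordered'' means $U$ represents a quantum comb of $A\prec B$ or of $B\prec A$. $U$ represents a direct sum of pure combs if there are orthogonal decompositions $P=P^{A\prec B}\oplus P^{B\prec A}$, $F=F^{A\prec B}\oplus F^{B\prec A}$ and unitaries $U^{A\prec B}:P^{A\prec B}\otimes A_O\otimes B_O\to A_I\otimes B_I\otimes F^{A\prec B}$ representing a comb of $A\prec B$ and $U^{B\prec A}:P^{B\prec A}\otimes A_O\otimes B_O\to A_I\otimes B_I\otimes F^{B\prec A}$ representing a comb of $B\prec A$, with $U=U^{A\prec B}\oplus U^{B\prec A}$. In tensor products of operators with superscripts $X\to Y$, each factor maps the indicated input space to the indicated output space, and the factors are arranged so that the product maps $P\otimes A_O\otimes B_O$ to $A_I\otimes B_I\otimes F$. *)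

(* Defs.v *)
(* Finite-dimensional Hilbert spaces are modelled as coordinate
   spaces C^n (C : numClosedFieldType, e.g. the complex numbers), operators as
   matrices acting on column vectors, and tensor products via the Kronecker
   product / index encoding of mathcomp-real-closed's mxtens.v. *)
From HB Require Import structures.
From mathcomp Require Import all_boot all_order all_algebra.
From mathcomp Require Export mxtens.
Set Implicit Arguments. Unset Strict Implicit. Unset Printing Implicit Defensive.
Import Order.TTheory GRing.Theory Num.Theory.
Local Open Scope ring_scope.

Section Defs.
Variable C : numClosedFieldType.

Definition adjmx m n (A : 'M[C]_(m, n)) : 'M[C]_(n, m) := (map_mx Num.conj A)^T.

Definition unitary_mx m n (A : 'M[C]_(m, n)) : Prop :=
  A *m adjmx A = 1%:M /\ adjmx A *m A = 1%:M.

Definition ix1 a b c (i : 'I_(a * b * c)) : 'I_a := (mxtens_unindex (mxtens_unindex i).1).1.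
Definition ix2 a b c (i : 'I_(a * b * c)) : 'I_b := (mxtens_unindex (mxtens_unindex i).1).2.
Definition ix3 a b c (i : 'I_(a * b * c)) : 'I_c := (mxtens_unindex i).2.
Definition jx1 a b (i : 'I_(a * b)) : 'I_a := (mxtens_unindex i).1.
Definition jx2 a b (i : 'I_(a * b)) : 'I_b := (mxtens_unindex i).2.

Definition dlt n (i j : 'I_n) : C := (i == j)%:R.

(* A two-slot supermap represented by V : P'(x)A_O(x)B_O -> A_I(x)B_I(x)F'
   (input factors in the order P', A_O, B_O; output A_I, B_I, F').
   Choi vector |V>> = sum_i |i> (x) V|i>, so the Choi operator W = |V>><<V| has
   entries W[(in,out),(in',out')] = V[out,in] * conj V[out',in'].  *)
Section Comb.
Variables (p aO bO aI bI f : nat).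
Variable V : 'M[C]_(aI * bI * f, p * aO * bO).

Definition choiW (pp : 'I_p) (ao : 'I_aO) (bo : 'I_bO) (ai : 'I_aI) (bi : 'I_bI) (ff : 'I_f)
                 (pp' : 'I_p) (ao' : 'I_aO) (bo' : 'I_bO) (ai' : 'I_aI) (bi' : 'I_bI) (ff' : 'I_f) : C :=
  V (mxtens_index (mxtens_index (ai, bi), ff)) (mxtens_index (mxtens_index (pp, ao), bo))
  * (V (mxtens_index (mxtens_index (ai', bi'), ff')) (mxtens_index (mxtens_index (pp', ao'), bo')))^*.

(* quantum comb of A < B:  Tr_F' W = 1^{B_O} (x) R2,  Tr_{B_I} R2 = 1^{A_O} (x) R1,
   Tr_{A_I} R1 = 1^{P'}  (R2 acts on P',A_O,A_I,B_I ; R1 on P',A_I) *)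
Definition comb_AB : Prop :=
  exists (R2 : 'I_p -> 'I_aO -> 'I_aI -> 'I_bI -> 'I_p -> 'I_aO -> 'I_aI -> 'I_bI -> C)
         (R1 : 'I_p -> 'I_aI -> 'I_p -> 'I_aI -> C),
    [/\ (forall pp ao bo ai bi pp' ao' bo' ai' bi',
           \sum_(ff < f) choiW pp ao bo ai bi ff pp' ao' bo' ai' bi' ff
           = dlt bo bo' * R2 pp ao ai bi pp' ao' ai' bi'),
        (forall pp ao ai pp' ao' ai',
           \sum_(bi < bI) R2 pp ao ai bi pp' ao' ai' bi = dlt ao ao' * R1 pp ai pp' ai') &
        (forall pp pp', \sum_(ai < aI) R1 pp ai pp' ai = dlt pp pp')].

(* quantum comb of B < A (roles of A and B exchanged):
   Tr_F' W = 1^{A_O} (x) R2,  Tr_{A_I} R2 = 1^{B_O} (x) R1,  Tr_{B_I} R1 = 1^{P'}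
   (R2 acts on P',B_O,A_I,B_I ; R1 on P',B_I) *)
Definition comb_BA : Prop :=
  exists (R2 : 'I_p -> 'I_bO -> 'I_aI -> 'I_bI -> 'I_p -> 'I_bO -> 'I_aI -> 'I_bI -> C)
         (R1 : 'I_p -> 'I_bI -> 'I_p -> 'I_bI -> C),
    [/\ (forall pp ao bo ai bi pp' ao' bo' ai' bi',
           \sum_(ff < f) choiW pp ao bo ai bi ff pp' ao' bo' ai' bi' ff
           = dlt ao ao' * R2 pp bo ai bi pp' bo' ai' bi'),
        (forall pp bo bi pp' bo' bi',
           \sum_(ai < aI) R2 pp bo ai bi pp' bo' ai bi' = dlt bo bo' * R1 pp bi pp' bi') &
        (forall pp pp', \sum_(bi < bI) R1 pp bi pp' bi = dlt pp pp')].

Definition causally_ordered : Prop := comb_AB \/ comb_BA.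
End Comb.

Definition dsum_op aO bO aI bI p1 p2 f1 f2
    (U1 : 'M[C]_(aI * bI * f1, p1 * aO * bO)) (U2 : 'M[C]_(aI * bI * f2, p2 * aO * bO))
    : 'M[C]_(aI * bI * (f1 + f2), (p1 + p2) * aO * bO) :=
  \matrix_(o, i)
    match split (ix3 o), split (ix1 i) with
    | inl ff, inl pp => U1 (mxtens_index (mxtens_index (ix1 o, ix2 o), ff))
                           (mxtens_index (mxtens_index (pp, ix2 i), ix3 i))
    | inr ff, inr pp => U2 (mxtens_index (mxtens_index (ix1 o, ix2 o), ff))
                           (mxtens_index (mxtens_index (pp, ix2 i), ix3 i))
    | _, _ => 0
    end.

(* U : P(x)A_O(x)B_O -> A_I(x)B_I(x)F represents a direct sum of pure combs:
   orthogonal decompositions P = P1 (+) P2, F = F1 (+) F2 (encoded by unitary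
   identifications WP : C^(p1+p2) -> P, WF : C^(f1+f2) -> F), unitaries U1 (comb
   of A<B) and U2 (comb of B<A) with U = U1 (+) U2. *)
Definition dsum_pure_combs p aO bO aI bI f (U : 'M[C]_(aI * bI * f, p * aO * bO)) : Prop :=
  exists (p1 p2 f1 f2 : nat) (WP : 'M[C]_(p, p1 + p2)) (WF : 'M[C]_(f, f1 + f2))
         (U1 : 'M[C]_(aI * bI * f1, p1 * aO * bO)) (U2 : 'M[C]_(aI * bI * f2, p2 * aO * bO)),
    [/\ unitary_mx WP, unitary_mx WF,
        unitary_mx U1 /\ comb_AB U1, unitary_mx U2 /\ comb_BA U2 &
        U = ((1%:M *t 1%:M) *t WF) *m dsum_op U1 U2 *m ((adjmx WP *t 1%:M) *t 1%:M)].

(* V0^{P->B_I} (x) V1^{B_O->A_I} (x) V2^{A_O->F}, arranged as a map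
   P(x)A_O(x)B_O -> A_I(x)B_I(x)F *)
Definition cross_op p aO bO aI bI f
    (V0 : 'M[C]_(bI, p)) (V1 : 'M[C]_(aI, bO)) (V2 : 'M[C]_(f, aO))
    : 'M[C]_(aI * bI * f, p * aO * bO) :=
  \matrix_(o, i) (V1 (ix1 o) (ix3 i) * V0 (ix2 o) (ix1 i) * V2 (ix3 o) (ix2 i)).

(* the operator of part (2), on (P_c(x)P_t)(x)A_O(x)B_O -> A_I(x)B_I(x)(F_c(x)F_t):
   |0><0| (x) U0(x)U1(x)U2 + |1><1| (x) V0(x)V1(x)V2 *)
Definition ctrl_op d (U0 U1 U2 V0 V1 V2 : 'M[C]_d)
    : 'M[C]_(d * d * (2 * d), (2 * d) * d * d) :=
  \matrix_(o, i)
    let pc := jx1 (ix1 i) in let pt := jx2 (ix1 i) in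
    let fc := jx1 (ix3 o) in let ft := jx2 (ix3 o) in
    ((val pc == 0%N) && (val fc == 0%N))%:R
       * (U0 (ix1 o) pt * U1 (ix2 o) (ix2 i) * U2 ft (ix3 i))
    + ((val pc == 1%N) && (val fc == 1%N))%:R
       * (V0 (ix2 o) pt * V1 (ix1 o) (ix3 i) * V2 ft (ix2 i)).

End Defs.

(* Main.v *)
Require Import Defs.
From HB Require Import structures.
From mathcomp Require Import all_boot all_order all_algebra mxtens.
From mathcomp Require Import ring zify.
Import Order.TTheory GRing.Theory Num.Theory.
Local Open Scope ring_scope.
Set Implicit Arguments. Unset Strict Implicit. Unset Printing Implicit Defensive.

Lemma sum_tens (C : numClosedFieldType) m n (F : 'I_(m * n) -> C) :
  \sum_k F k = \sum_(i < m) \sum_(j < n) F (mxtens_index (i, j)).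
Proof.
rewrite pair_big /= (reindex (@mxtens_index m n)) /=.
  by apply: eq_bigr => -[i j].
by exists (@mxtens_unindex m n) => k _; rewrite (mxtens_indexK, mxtens_unindexK).
Qed.

Lemma idx_eq m n (i i' : 'I_m) (j j' : 'I_n) :
  (mxtens_index (i, j) == mxtens_index (i', j')) = (i == i') && (j == j').
Proof. by rewrite (can_eq (@mxtens_indexK m n)) xpair_eqE. Qed.

Lemma sum_delta (C : numClosedFieldType) n (j : 'I_n) (F : 'I_n -> C) :
  \sum_i (j == i)%:R * F i = F j.
Proof.
rewrite (bigD1 j) //= eqxx mul1r big1 ?addr0 // => i /negbTE.
by rewrite eq_sym => ->; rewrite mul0r.
Qed.

Lemma adjE (C : numClosedFieldType) m n (A : 'M[C]_(m, n)) i j : adjmx A i j = (A j i)^*.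
Proof. by rewrite /adjmx !mxE. Qed.

Lemma adjmxK (C : numClosedFieldType) m n (A : 'M[C]_(m, n)) : adjmx (adjmx A) = A.
Proof. by apply/matrixP => i j; rewrite !adjE conjCK. Qed.

Lemma adjmxM (C : numClosedFieldType) m n p (A : 'M[C]_(m, n)) (B : 'M[C]_(n, p)) :
  adjmx (A *m B) = adjmx B *m adjmx A.
Proof.
apply/matrixP => i j; rewrite adjE !mxE rmorph_sum; apply: eq_bigr => k _.
by rewrite !adjE rmorphM mulrC.
Qed.

Lemma unitary_dim (C : numClosedFieldType) m n (A : 'M[C]_(m, n)) : unitary_mx A -> m = n.
Proof.
move=> [H1 H2]; apply/eqP; rewrite eqn_leq; apply/andP; split.
  by rewrite -{1}(mxrank1 C m) -H1 (leq_trans (mxrankM_maxl _ _)) // rank_leq_col.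
by rewrite -{1}(mxrank1 C n) -H2 (leq_trans (mxrankM_maxl _ _)) // rank_leq_col.
Qed.

Lemma unitaryP (C : numClosedFieldType) n (A : 'M[C]_n) : adjmx A *m A = 1%:M -> unitary_mx A.
Proof. by move=> H; split => //; apply: mulmx1C. Qed.

Lemma unitary1 (C : numClosedFieldType) n : unitary_mx (1%:M : 'M[C]_n).
Proof.
apply: unitaryP; rewrite mulmx1; apply/matrixP => i j.
by rewrite adjE !mxE eq_sym; case: (i == j); rewrite ?rmorph1 ?rmorph0.
Qed.

Lemma nrm_ge0 (C : numClosedFieldType) (I : finType) (F : I -> C) :
  0 <= \sum_i F i * (F i)^*.
Proof. by apply: sumr_ge0 => i _; apply: mul_conjC_ge0. Qed.

Lemma nrm_eq0 (C : numClosedFieldType) (I : finType) (F : I -> C) :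
  \sum_i F i * (F i)^* = 0 -> forall i, F i = 0.
Proof.
move=> H i; have := psumr_eq0P (fun j _ => mul_conjC_ge0 (F j)) H.
by move=> /(_ i isT) /eqP; rewrite mul_conjC_eq0 => /eqP.
Qed.

Definition Km (C : numClosedFieldType) nz nw nx ny (M : 'I_nz -> 'I_nw -> 'I_nx -> 'I_ny -> C)
  (zy : 'I_ny -> 'I_nz) (x0 : 'I_nx) : 'M[C]_(ny, nw) := \matrix_(y, w) M (zy y) w x0 y.
Definition nrm (C : numClosedFieldType) ny nw (K : 'M[C]_(ny, nw)) y := \sum_w K y w * (K y w)^*.
Definition Kinv (C : numClosedFieldType) ny nw (K : 'M[C]_(ny, nw)) : 'M[C]_(nw, ny) :=
  \matrix_(w, y) ((K y w)^* / nrm K y).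

Definition orthoP (C : numClosedFieldType) nz nw nx ny (M : 'I_nz -> 'I_nw -> 'I_nx -> 'I_ny -> C) :=
  forall x y x' y', \sum_z \sum_w (M z w x y)^* * M z w x' y' = dlt C x x' * dlt C y y'.
Definition condP (C : numClosedFieldType) nz nw nx ny (M : 'I_nz -> 'I_nw -> 'I_nx -> 'I_ny -> C)
  (R : 'I_nx -> 'I_nz -> 'I_nx -> 'I_nz -> C) :=
  forall x y x' y' z z', \sum_w M z w x y * (M z' w x' y')^* = dlt C y y' * R x z x' z'.

Lemma exists_zy (C : numClosedFieldType) nz nw nx ny (M : 'I_nz -> 'I_nw -> 'I_nx -> 'I_ny -> C) x0 :
  orthoP M -> exists zy : 'I_ny -> 'I_nz, forall y, nrm (Km M zy x0) y != 0.
Proof.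
move=> Ho.
suff [zy Hzy] : exists zy : 'I_ny -> 'I_nz, forall y,
    \sum_w M (zy y) w x0 y * (M (zy y) w x0 y)^* != 0.
  by exists zy => y; rewrite /nrm; under eq_bigr do rewrite !mxE; apply: Hzy.
suff H : forall y : 'I_ny, exists z : 'I_nz,
    \sum_w M z w x0 y * (M z w x0 y)^* != 0.
  have [zy Hzy] := @fin_all_exists _ (fun _ => 'I_nz) (fun y z => \sum_w M z w x0 y * (M z w x0 y)^* != 0) H.
  by exists zy.
move=> y; case: (pickP (fun z => \sum_w M z w x0 y * (M z w x0 y)^* != 0)) => [z Hz|H].
  by exists z.
exfalso; have := Ho x0 y x0 y; rewrite /dlt !eqxx mulr1 big1 => [/eqP|z _].
  by rewrite eq_sym oner_eq0.
have /negbFE/eqP HH := H z; rewrite -[RHS]HH.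
by apply: eq_bigr => w _; rewrite mulrC.
Qed.

Lemma KK (C : numClosedFieldType) nz nw nx ny (M : 'I_nz -> 'I_nw -> 'I_nx -> 'I_ny -> C) R zy x0 :
  condP M R -> forall y y',
  \sum_w Km M zy x0 y w * (Km M zy x0 y' w)^* = (y == y')%:R * nrm (Km M zy x0) y.
Proof.
move=> Hc y y'; case: (eqVneq y y') => [<-|ne]; first by rewrite mul1r.
rewrite mul0r; under eq_bigr do rewrite !mxE.
by rewrite Hc /dlt (negbTE ne) mul0r.
Qed.

Lemma KKinv (C : numClosedFieldType) ny nw (K : 'M[C]_(ny, nw)) :
  (forall y, nrm K y != 0) ->
  (forall y y', \sum_w K y w * (K y' w)^* = (y == y')%:R * nrm K y) ->
  K *m Kinv K = 1%:M.
Proof.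
move=> Hn HK; apply/matrixP => y y'; rewrite !mxE.
under eq_bigr do rewrite !mxE mulrA.
rewrite -mulr_suml HK; case: (eqVneq y y') => [<-|ne].
  by rewrite mul1r divff.
by rewrite !mul0r.
Qed.

Lemma lemA (C : numClosedFieldType) nz nw nx ny (M : 'I_nz -> 'I_nw -> 'I_nx -> 'I_ny -> C) R
  (x0 : 'I_nx) : orthoP M -> condP M R -> (ny <= nw)%N.
Proof.
move=> Ho Hc; have [zy Hzy] := exists_zy x0 Ho.
have H1 := KKinv Hzy (KK zy x0 Hc).
by rewrite -(mxrank1 C ny) -H1 (leq_trans (mxrankM_maxl _ _)) // rank_leq_col.
Qed.

Lemma conjM (C : numClosedFieldType) (x y : C) : (x * y)^* = x^* * y^*.
Proof. by rewrite rmorphM. Qed.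

Lemma conj_div (C : numClosedFieldType) (x y : C) : (x / y)^* = x^* / y^*.
Proof. by rewrite conjM fmorphV. Qed.

Lemma lemB (C : numClosedFieldType) n m (M : 'I_n -> 'I_m -> 'I_n -> 'I_m -> C) R :
  orthoP M -> condP M R ->
  exists (S : 'M[C]_n) (T : 'M[C]_m),
    [/\ unitary_mx S, unitary_mx T & forall z w x y, M z w x y = S z x * T w y].
Proof.
case: n M R => [|n] M R Ho Hc.
  by exists 1%:M, 1%:M; split; [exact: unitary1|exact: unitary1|move=> [] ].
case: m M R Ho Hc => [|m] M R Ho Hc.
  by exists 1%:M, 1%:M; split; [exact: unitary1|exact: unitary1|move=> z [] ].
pose x0 : 'I_n.+1 := ord0; pose y0 : 'I_m.+1 := ord0.
have [zy Hzy] := exists_zy x0 Ho.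
have HK := KK zy x0 Hc.
move: Hzy HK; set K := Km M zy x0 => Hzy HK.
have HKM : forall y w, K y w = M (zy y) w x0 y by move=> y w; rewrite /K mxE.
have HKi : Kinv K *m K = 1%:M by apply: mulmx1C; apply: KKinv.
clearbody K.
pose a z x y := (\sum_w M z w x y * (K y w)^*) / nrm K y.
have Hdec : forall z w x y, M z w x y = a z x y * K y w.
  move=> z w x y.
  have -> : M z w x y = \sum_w' M z w' x y * (Kinv K *m K) w' w.
    rewrite HKi; under eq_bigr do rewrite mxE.
    rewrite (bigD1 w) //= eqxx mulr1 big1 ?addr0 // => w' /negbTE.
    by move=> ->; rewrite mulr0.
  under eq_bigr do rewrite mxE mulr_sumr.
  rewrite exchange_big /= (bigD1 y) //= [X in _ + X]big1 ?addr0.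
    rewrite /a -mulrA mulr_suml; apply: eq_bigr => w' _; rewrite !mxE.
    by rewrite !mulrA; ring.
  move=> y' ne.
  have H0 : \sum_w' M z w' x y * (K y' w')^* = 0.
    under eq_bigr do rewrite HKM.
    by rewrite Hc /dlt eq_sym (negbTE ne) mul0r.
  transitivity ((\sum_w' M z w' x y * (K y' w')^*) * (K y' w / nrm K y')); last first.
    by rewrite H0 mul0r.
  rewrite mulr_suml.
  by apply: eq_bigr => w' _; rewrite !mxE; ring.
clearbody a.
pose r := R x0 (zy y0) x0 (zy y0).
pose a1 y := a (zy y0) x0 y.
have HE1 : forall z x y, a z x y * (a1 y)^* * nrm K y = R x z x0 (zy y0).
  move=> z x y.
  have := Hc x y x0 y z (zy y0); rewrite /dlt eqxx mul1r => <-.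
  rewrite /nrm mulr_sumr; apply: eq_bigr => w _ /=.
  rewrite (Hdec z w x y) (Hdec (zy y0) w x0 y) -/(a1 y) [in RHS]conjM.
  ring.
have Hr0 : r = nrm K y0.
  rewrite /r; have := Hc x0 y0 x0 y0 (zy y0) (zy y0); rewrite /dlt eqxx mul1r => <-.
  by rewrite /nrm; apply: eq_bigr => w _; rewrite HKM.
have Hr : forall y, a1 y * (a1 y)^* * nrm K y = r by move=> y; rewrite HE1.
clearbody a1.
have r_neq0 : r != 0 by rewrite Hr0.
have r_ge0 : 0 <= r by rewrite Hr0 nrm_ge0.
have a1_neq0 : forall y, a1 y != 0.
  move=> y; apply/eqP => H; move: r_neq0; rewrite -(Hr y) H !mul0r eqxx.
  by [].
have nrm_conj : forall y, (nrm K y)^* = nrm K y by move=> y; rewrite geC0_conj // nrm_ge0.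
pose sr := sqrtC r.
have sr_neq0 : sr != 0 by rewrite sqrtC_eq0.
have sr_conj : sr^* = sr by rewrite geC0_conj // sqrtC_ge0.
have sr2 : sr * sr = r by rewrite -expr2 sqrtCK.
clearbody sr.
pose S : 'M[C]_n.+1 := \matrix_(z, x) (R x z x0 (zy y0) / sr).
pose T : 'M[C]_m.+1 := \matrix_(w, y) (sr * K y w / ((a1 y)^* * nrm K y)).
have Hdec' : forall z w x y, M z w x y = S z x * T w y.
  move=> z w x y; rewrite Hdec !mxE -(HE1 z x y).
  have := a1_neq0 y; have := Hzy y => h1 h2.
  have h3 : (a1 y)^* != 0 by rewrite conjC_eq0.
  by field; rewrite sr_neq0 h1 h3.
have HT : adjmx T *m T = 1%:M.
  apply/matrixP => y y'; rewrite !mxE.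
  pose c := sr * sr / (a1 y * nrm K y * ((a1 y')^* * nrm K y')).
  transitivity (c * \sum_w K y' w * (K y w)^*).
    rewrite mulr_sumr; apply: eq_bigr => w _; rewrite adjE !mxE.
    rewrite !conj_div !conjM /c conjCK nrm_conj sr_conj.
    have := a1_neq0 y; have := Hzy y => h1 h2.
    have := a1_neq0 y'; have := Hzy y' => h1' h2'.
    have h3 : (a1 y')^* != 0 by rewrite conjC_eq0.
    by field; rewrite h1 h2 h3 h1'.
  rewrite HK /c; case: (eqVneq y' y) => [->|ne]; last by rewrite mul0r mulr0.
  rewrite ?eqxx /= mul1r sr2 -(Hr y).
  have := a1_neq0 y; have := Hzy y => h1 h2.
  have h3 : (a1 y)^* != 0 by rewrite conjC_eq0.
  by field; rewrite h1 h2 h3.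
have HT1 : \sum_w (T w y0)^* * T w y0 = 1.
  transitivity ((adjmx T *m T) y0 y0); last by rewrite HT mxE eqxx.
  by rewrite mxE; apply: eq_bigr => w _; rewrite adjE.
exists S, T; split => //; last by apply: unitaryP.
apply: unitaryP; apply/matrixP => x x'.
have := Ho x y0 x' y0; rewrite /dlt eqxx mulr1 !mxE => <-.
apply: eq_bigr => z _; rewrite adjE.
rewrite -[LHS]mulr1 -HT1 mulr_sumr; apply: eq_bigr => w _.
by rewrite !Hdec' !conjM; ring.
Qed.

Notation ixx3 a b c := (mxtens_index (mxtens_index (a, b), c)).

Lemma dltM (C : numClosedFieldType) (b1 b2 : bool) : ((b1 && b2)%:R : C) = b1%:R * b2%:R.
Proof. by case: b1; case: b2; rewrite /= ?mulr1 ?mulr0. Qed.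

Lemma ortho_gen (C : numClosedFieldType) N1 N2 nz nw nx ny (V : 'M[C]_(N1, N2))
  (fo : 'I_nz -> 'I_nw -> 'I_N1) (fi : 'I_nx -> 'I_ny -> 'I_N2) :
  adjmx V *m V = 1%:M ->
  (forall F : 'I_N1 -> C, \sum_k F k = \sum_z \sum_w F (fo z w)) ->
  (forall x y x' y', (fi x y == fi x' y') = (x == x') && (y == y')) ->
  orthoP (fun z w x y => V (fo z w) (fi x y)).
Proof.
move=> H Hs Hi x y x' y'.
have := congr1 (fun A : 'M_N2 => A (fi x y) (fi x' y')) H; rewrite /= !mxE Hi dltM => <-.
rewrite Hs; apply: eq_bigr => z _; apply: eq_bigr => w _.
by rewrite adjE.
Qed.

Lemma sum_tensC (C : numClosedFieldType) m n (F : 'I_(m * n) -> C) :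
  \sum_k F k = \sum_(j < n) \sum_(i < m) F (mxtens_index (i, j)).
Proof. by rewrite sum_tens exchange_big. Qed.

Lemma condAB (C : numClosedFieldType) p aO bO aI bI f (V : 'M[C]_(aI * bI * f, p * aO * bO))
  R2 :
  (forall pp ao bo ai bi pp' ao' bo' ai' bi',
     \sum_(ff < f) choiW V pp ao bo ai bi ff pp' ao' bo' ai' bi' ff
     = dlt C bo bo' * R2 pp ao ai bi pp' ao' ai' bi') ->
  condP (fun z w x y => V (mxtens_index (z, w)) (mxtens_index (x, y)))
    (fun x z x' z' => R2 (@mxtens_unindex p aO x).1 (@mxtens_unindex p aO x).2
                         (@mxtens_unindex aI bI z).1 (@mxtens_unindex aI bI z).2
                         (@mxtens_unindex p aO x').1 (@mxtens_unindex p aO x').2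
                         (@mxtens_unindex aI bI z').1 (@mxtens_unindex aI bI z').2).
Proof.
move=> H1 x y x' y' z z'.
case: (mxtens_indexP x) => pp ao; case: (mxtens_indexP x') => pp' ao'.
case: (mxtens_indexP z) => ai bi; case: (mxtens_indexP z') => ai' bi'.
by rewrite !mxtens_indexK /= -H1.
Qed.

Lemma condBA (C : numClosedFieldType) p aO bO aI bI f (V : 'M[C]_(aI * bI * f, p * aO * bO))
  R2 :
  (forall pp ao bo ai bi pp' ao' bo' ai' bi',
     \sum_(ff < f) choiW V pp ao bo ai bi ff pp' ao' bo' ai' bi' ff
     = dlt C ao ao' * R2 pp bo ai bi pp' bo' ai' bi') ->
  condP (fun z w x y => V (mxtens_index (z, w))
           (ixx3 (@mxtens_unindex p bO x).1 y (@mxtens_unindex p bO x).2))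
    (fun x z x' z' => R2 (@mxtens_unindex p bO x).1 (@mxtens_unindex p bO x).2
                         (@mxtens_unindex aI bI z).1 (@mxtens_unindex aI bI z).2
                         (@mxtens_unindex p bO x').1 (@mxtens_unindex p bO x').2
                         (@mxtens_unindex aI bI z').1 (@mxtens_unindex aI bI z').2).
Proof.
move=> H1 x y x' y' z z'.
case: (mxtens_indexP x) => pp bo; case: (mxtens_indexP x') => pp' bo'.
case: (mxtens_indexP z) => ai bi; case: (mxtens_indexP z') => ai' bi'.
by rewrite !mxtens_indexK /= -H1.
Qed.

Lemma orthoAB (C : numClosedFieldType) nz nw nx ny (V : 'M[C]_(nz * nw, nx * ny)) :
  adjmx V *m V = 1%:M ->
  orthoP (fun z w x y => V (mxtens_index (z, w)) (mxtens_index (x, y))).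
Proof.
move=> H; apply: (ortho_gen (fo := fun z w => mxtens_index (z, w))
                            (fi := fun x y => mxtens_index (x, y))) => //.
  by move=> F; rewrite sum_tens.
by move=> *; rewrite idx_eq.
Qed.

Lemma orthoBA (C : numClosedFieldType) nz nw p a b (V : 'M[C]_(nz * nw, p * a * b)) :
  adjmx V *m V = 1%:M ->
  orthoP (fun z w x y => V (mxtens_index (z, w))
           (ixx3 (@mxtens_unindex p b x).1 y (@mxtens_unindex p b x).2)).
Proof.
move=> H; apply: (ortho_gen (fo := fun z w => mxtens_index (z, w))
    (fi := fun x y => ixx3 (@mxtens_unindex p b x).1 y (@mxtens_unindex p b x).2)) => //.
  by move=> F; rewrite sum_tens.
move=> x y x' y'.
case: (mxtens_indexP x) => pp bo; case: (mxtens_indexP x') => pp' bo'.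
rewrite !mxtens_indexK /= !idx_eq.
by case: (pp == pp'); case: (bo == bo'); case: (y == y').
Qed.

Lemma colnorm (C : numClosedFieldType) n (T : 'M[C]_n) y :
  adjmx T *m T = 1%:M -> \sum_w T w y * (T w y)^* = 1.
Proof.
move=> H; transitivity ((adjmx T *m T) y y); last by rewrite H mxE eqxx.
by rewrite mxE; apply: eq_bigr => w _; rewrite adjE mulrC.
Qed.

Lemma factorAB (C : numClosedFieldType) d (V : 'M[C]_(d * d * d, d * d * d)) :
  (0 < d)%N -> unitary_mx V -> comb_AB V ->
  exists S0 S1 T : 'M[C]_d, [/\ unitary_mx S0, unitary_mx S1, unitary_mx T &
    forall ai bi f pp ao bo, V (ixx3 ai bi f) (ixx3 pp ao bo) = S0 ai pp * S1 bi ao * T f bo].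
Proof.
move=> dpos [_ uV] [R2 [R1 [H1 H2 H3]]].
have [S [T [uS uT HST]]] := lemB (orthoAB uV) (condAB H1).
pose y0 : 'I_d := Ordinal dpos.
have HR2 : forall pp ao ai bi pp' ao' ai' bi',
    R2 pp ao ai bi pp' ao' ai' bi'
    = S (mxtens_index (ai, bi)) (mxtens_index (pp, ao))
      * (S (mxtens_index (ai', bi')) (mxtens_index (pp', ao')))^*.
  move=> pp ao ai bi pp' ao' ai' bi'.
  have := H1 pp ao y0 ai bi pp' ao' y0 ai' bi'; rewrite /dlt eqxx mul1r => <-.
  rewrite -[RHS]mulr1 -(colnorm y0 uT.2) mulr_sumr; apply: eq_bigr => ff _.
  by rewrite /choiW !HST conjM; ring.
have HC : condP (fun ai bi pp ao => S (mxtens_index (ai, bi)) (mxtens_index (pp, ao))) R1.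
  move=> pp ao pp' ao' ai ai'.
  rewrite -H2; apply: eq_bigr => bi _.
  by rewrite HR2.
have [S0 [S1 [uS0 uS1 HS]]] := lemB (orthoAB uS.2) HC.
exists S0, S1, T; split => // ai bi f pp ao bo.
by rewrite HST HS.
Qed.

Lemma factorBA (C : numClosedFieldType) d (V : 'M[C]_(d * d * d, d * d * d)) :
  (0 < d)%N -> unitary_mx V -> comb_BA V ->
  exists S0 S1 T : 'M[C]_d, [/\ unitary_mx S0, unitary_mx S1, unitary_mx T &
    forall ai bi f pp ao bo, V (ixx3 ai bi f) (ixx3 pp ao bo) = S0 bi pp * S1 ai bo * T f ao].
Proof.
move=> dpos [_ uV] [R2 [R1 [H1 H2 H3]]].
have [S [T [uS uT HST]]] := lemB (orthoBA uV) (condBA H1).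
pose y0 : 'I_d := Ordinal dpos.
have HST' : forall ai bi f pp ao bo, V (ixx3 ai bi f) (ixx3 pp ao bo)
    = S (mxtens_index (ai, bi)) (mxtens_index (pp, bo)) * T f ao.
  move=> ai bi f pp ao bo.
  by rewrite -HST mxtens_indexK.
have HR2 : forall pp bo ai bi pp' bo' ai' bi',
    R2 pp bo ai bi pp' bo' ai' bi'
    = S (mxtens_index (ai, bi)) (mxtens_index (pp, bo))
      * (S (mxtens_index (ai', bi')) (mxtens_index (pp', bo')))^*.
  move=> pp bo ai bi pp' bo' ai' bi'.
  have := H1 pp y0 bo ai bi pp' y0 bo' ai' bi'; rewrite /dlt eqxx mul1r => <-.
  rewrite -[RHS]mulr1 -(colnorm y0 uT.2) mulr_sumr; apply: eq_bigr => ff _.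
  by rewrite /choiW !HST' conjM; ring.
have Ho : orthoP (fun bi ai pp bo => S (mxtens_index (ai, bi)) (mxtens_index (pp, bo))).
  apply: (ortho_gen (fo := fun bi ai => mxtens_index (ai, bi))
                    (fi := fun x y => mxtens_index (x, y)) uS.2).
    by move=> F; rewrite sum_tensC.
  by move=> *; rewrite idx_eq.
have HC : condP (fun bi ai pp bo => S (mxtens_index (ai, bi)) (mxtens_index (pp, bo))) R1.
  move=> pp bo pp' bo' bi bi'.
  rewrite -H2; apply: eq_bigr => ai _.
  by rewrite HR2.
have [S0 [S1 [uS0 uS1 HS]]] := lemB Ho HC.
exists S0, S1, T; split => // ai bi f pp ao bo.
by rewrite HST' HS.
Qed.

Lemma sum_delta_r (C : numClosedFieldType) n (j : 'I_n) (F : 'I_n -> C) :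
  \sum_i F i * (i == j)%:R = F j.
Proof. by rewrite -[RHS](sum_delta j F); apply: eq_bigr => i _; rewrite mulrC eq_sym. Qed.

Lemma right_entry (C : numClosedFieldType) N p q r p' (M : 'M[C]_(N, p' * q * r))
  (B : 'M[C]_(p', p)) o pp ao bo :
  (M *m ((B *t 1%:M) *t 1%:M)) o (ixx3 pp ao bo) = \sum_(p1 < p') M o (ixx3 p1 ao bo) * B p1 pp.
Proof.
rewrite mxE sum_tens sum_tens; apply: eq_bigr => i _.
under eq_bigr => j _ do under eq_bigr => k _ do rewrite !tensmxE !mxE !mulrA.
under eq_bigr => j _ do rewrite sum_delta_r.
by rewrite sum_delta_r.
Qed.

Lemma left_entry (C : numClosedFieldType) N a b c f' (A : 'M[C]_(c, f'))
  (X : 'M[C]_(a * b * f', N)) ai bi f l :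
  (((1%:M *t 1%:M) *t A) *m X) (ixx3 ai bi f) l = \sum_(f1 < f') A f f1 * X (ixx3 ai bi f1) l.
Proof.
rewrite mxE sum_tens sum_tens.
under eq_bigr => i _ do under eq_bigr => j _ do under eq_bigr => k _ do rewrite !tensmxE !mxE -!mulrA.
under eq_bigr => i _ do under eq_bigr => j _ do rewrite -mulr_sumr.
under eq_bigr => i _ do rewrite -mulr_sumr.
rewrite sum_delta.
under eq_bigr => j _ do rewrite -mulr_sumr.
by rewrite sum_delta.
Qed.

Lemma conj_entry (C : numClosedFieldType) a b c p q r f' p'
  (A : 'M[C]_(c, f')) (X : 'M[C]_(a * b * f', p' * q * r)) (B : 'M[C]_(p', p))
  ai bi f pp ao bo :
  (((1%:M *t 1%:M) *t A) *m X *m ((B *t 1%:M) *t 1%:M)) (ixx3 ai bi f) (ixx3 pp ao bo)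
  = \sum_(f1 < f') \sum_(p1 < p') A f f1 * X (ixx3 ai bi f1) (ixx3 p1 ao bo) * B p1 pp.
Proof.
rewrite right_entry; under eq_bigr do rewrite left_entry mulr_suml.
rewrite exchange_big; apply: eq_bigr => f1 _; apply: eq_bigr => p1 _.
done.
Qed.

Lemma conj_sum (C : numClosedFieldType) (I : finType) (F : I -> C) :
  (\sum_i F i)^* = \sum_i (F i)^*.
Proof. by rewrite rmorph_sum. Qed.

Lemma sum_lin (C : numClosedFieldType) (I : finType) n (c : 'I_n -> 'I_n -> C)
  (F : 'I_n -> 'I_n -> I -> C) :
  \sum_x \sum_q \sum_q' c q q' * F q q' x = \sum_q \sum_q' c q q' * \sum_x F q q' x.
Proof.
rewrite exchange_big; apply: eq_bigr => q _; rewrite exchange_big.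
by apply: eq_bigr => q' _; rewrite mulr_sumr.
Qed.

Lemma invF (C : numClosedFieldType) p aO bO aI bI f f'
  (V : 'M[C]_(aI * bI * f, p * aO * bO)) (V' : 'M[C]_(aI * bI * f', p * aO * bO))
  (A : 'M[C]_(f', f)) :
  (forall f1 f2, \sum_ff (A ff f1)^* * A ff f2 = dlt C f1 f2) ->
  (forall ai bi ff pp ao bo, V' (ixx3 ai bi ff) (ixx3 pp ao bo)
       = \sum_f1 A ff f1 * V (ixx3 ai bi f1) (ixx3 pp ao bo)) ->
  forall pp ao bo ai bi pp' ao' bo' ai' bi',
   \sum_ff choiW V' pp ao bo ai bi ff pp' ao' bo' ai' bi' ff
   = \sum_ff choiW V pp ao bo ai bi ff pp' ao' bo' ai' bi' ff.
Proof.
move=> HA HV pp ao bo ai bi pp' ao' bo' ai' bi'; rewrite /choiW.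
under eq_bigr do rewrite !HV conj_sum mulr_suml.
under eq_bigr do under eq_bigr do rewrite mulr_sumr.
rewrite exchange_big; apply: eq_bigr => f1 _; rewrite exchange_big /=.
rewrite -[RHS](sum_delta f1 (fun f2 => V (ixx3 ai bi f1) (ixx3 pp ao bo)
                                        * (V (ixx3 ai' bi' f2) (ixx3 pp' ao' bo'))^*)).
apply: eq_bigr => f2 _.
have <- : dlt C f2 f1 = (f1 == f2)%:R by rewrite /dlt eq_sym.
rewrite -HA mulr_suml; apply: eq_bigr => ff _.
by rewrite conjM; ring.
Qed.

Lemma choiP (C : numClosedFieldType) p p' aO bO aI bI f
  (V : 'M[C]_(aI * bI * f, p * aO * bO)) (V' : 'M[C]_(aI * bI * f, p' * aO * bO))
  (B : 'M[C]_(p', p)) :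
  (forall ai bi ff pp ao bo, V' (ixx3 ai bi ff) (ixx3 pp ao bo)
       = \sum_q V (ixx3 ai bi ff) (ixx3 q ao bo) * (B pp q)^*) ->
  forall pp ao bo ai bi pp' ao' bo' ai' bi',
   \sum_ff choiW V' pp ao bo ai bi ff pp' ao' bo' ai' bi' ff
   = \sum_q \sum_q' (B pp q)^* * B pp' q' *
       \sum_ff choiW V q ao bo ai bi ff q' ao' bo' ai' bi' ff.
Proof.
move=> HV pp ao bo ai bi pp' ao' bo' ai' bi'; rewrite -sum_lin /choiW.
apply: eq_bigr => ff _; rewrite !HV conj_sum mulr_suml; apply: eq_bigr => q _.
rewrite mulr_sumr; apply: eq_bigr => q' _.
by rewrite !conjM conjCK; ring.
Qed.

Lemma invP_AB (C : numClosedFieldType) p p' aO bO aI bI f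
  (V : 'M[C]_(aI * bI * f, p * aO * bO)) (V' : 'M[C]_(aI * bI * f, p' * aO * bO))
  (B : 'M[C]_(p', p)) :
  (forall pp pp', \sum_q B pp q * (B pp' q)^* = dlt C pp pp') ->
  (forall ai bi ff pp ao bo, V' (ixx3 ai bi ff) (ixx3 pp ao bo)
       = \sum_q V (ixx3 ai bi ff) (ixx3 q ao bo) * (B pp q)^*) ->
  comb_AB V -> comb_AB V'.
Proof.
move=> HB HV [R2 [R1 [H1 H2 H3]]].
exists (fun pp ao ai bi pp' ao' ai' bi' =>
  \sum_q \sum_q' (B pp q)^* * B pp' q' * R2 q ao ai bi q' ao' ai' bi').
exists (fun pp ai pp' ai' => \sum_q \sum_q' (B pp q)^* * B pp' q' * R1 q ai q' ai').
split.
- move=> pp ao bo ai bi pp' ao' bo' ai' bi'; rewrite (choiP HV) mulr_sumr.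
  apply: eq_bigr => q _; rewrite mulr_sumr; apply: eq_bigr => q' _.
  by rewrite H1; ring.
- move=> pp ao ai pp' ao' ai'; rewrite sum_lin mulr_sumr.
  apply: eq_bigr => q _; rewrite mulr_sumr; apply: eq_bigr => q' _.
  by rewrite H2; ring.
- move=> pp pp'; rewrite sum_lin.
  under eq_bigr do under eq_bigr do rewrite H3.
  have -> : dlt C pp pp' = dlt C pp' pp by rewrite /dlt eq_sym.
  rewrite -HB; apply: eq_bigr => q _; rewrite /dlt.
  under eq_bigr do rewrite eq_sym.
  by rewrite sum_delta_r mulrC.
Qed.

Lemma invP_BA (C : numClosedFieldType) p p' aO bO aI bI f
  (V : 'M[C]_(aI * bI * f, p * aO * bO)) (V' : 'M[C]_(aI * bI * f, p' * aO * bO))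
  (B : 'M[C]_(p', p)) :
  (forall pp pp', \sum_q B pp q * (B pp' q)^* = dlt C pp pp') ->
  (forall ai bi ff pp ao bo, V' (ixx3 ai bi ff) (ixx3 pp ao bo)
       = \sum_q V (ixx3 ai bi ff) (ixx3 q ao bo) * (B pp q)^*) ->
  comb_BA V -> comb_BA V'.
Proof.
move=> HB HV [R2 [R1 [H1 H2 H3]]].
exists (fun pp bo ai bi pp' bo' ai' bi' =>
  \sum_q \sum_q' (B pp q)^* * B pp' q' * R2 q bo ai bi q' bo' ai' bi').
exists (fun pp bi pp' bi' => \sum_q \sum_q' (B pp q)^* * B pp' q' * R1 q bi q' bi').
split.
- move=> pp ao bo ai bi pp' ao' bo' ai' bi'; rewrite (choiP HV) mulr_sumr.
  apply: eq_bigr => q _; rewrite mulr_sumr; apply: eq_bigr => q' _.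
  by rewrite H1; ring.
- move=> pp bo bi pp' bo' bi'; rewrite sum_lin mulr_sumr.
  apply: eq_bigr => q _; rewrite mulr_sumr; apply: eq_bigr => q' _.
  by rewrite H2; ring.
- move=> pp pp'; rewrite sum_lin.
  under eq_bigr do under eq_bigr do rewrite H3.
  have -> : dlt C pp pp' = dlt C pp' pp by rewrite /dlt eq_sym.
  rewrite -HB; apply: eq_bigr => q _; rewrite /dlt.
  under eq_bigr do rewrite eq_sym.
  by rewrite sum_delta_r mulrC.
Qed.

Lemma invF_AB (C : numClosedFieldType) p aO bO aI bI f f'
  (V : 'M[C]_(aI * bI * f, p * aO * bO)) (V' : 'M[C]_(aI * bI * f', p * aO * bO))
  (A : 'M[C]_(f', f)) :
  (forall f1 f2, \sum_ff (A ff f1)^* * A ff f2 = dlt C f1 f2) ->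
  (forall ai bi ff pp ao bo, V' (ixx3 ai bi ff) (ixx3 pp ao bo)
       = \sum_f1 A ff f1 * V (ixx3 ai bi f1) (ixx3 pp ao bo)) ->
  (comb_AB V -> comb_AB V') /\ (comb_BA V -> comb_BA V').
Proof.
move=> HA HV; have E := invF HA HV.
split => -[R2 [R1 [H1 H2 H3]]]; exists R2, R1; split => // *; by rewrite E H1.
Qed.

Lemma split_l m n (j : 'I_m) : split (lshift n j) = inl j.
Proof. exact: (@unsplitK m n (inl j)). Qed.
Lemma split_r m n (j : 'I_n) : split (rshift m j) = inr j.
Proof. exact: (@unsplitK m n (inr j)). Qed.

Lemma dsumE (C : numClosedFieldType) aO bO aI bI p1 p2 f1 f2
  (U1 : 'M[C]_(aI * bI * f1, p1 * aO * bO)) (U2 : 'M[C]_(aI * bI * f2, p2 * aO * bO))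
  ai bi ao bo :
  [/\ forall f p, dsum_op U1 U2 (ixx3 ai bi (lshift f2 f)) (ixx3 (lshift p2 p) ao bo)
                  = U1 (ixx3 ai bi f) (ixx3 p ao bo),
      forall f p, dsum_op U1 U2 (ixx3 ai bi (rshift f1 f)) (ixx3 (rshift p1 p) ao bo)
                  = U2 (ixx3 ai bi f) (ixx3 p ao bo),
      forall f p, dsum_op U1 U2 (ixx3 ai bi (lshift f2 f)) (ixx3 (rshift p1 p) ao bo) = 0 &
      forall f p, dsum_op U1 U2 (ixx3 ai bi (rshift f1 f)) (ixx3 (lshift p2 p) ao bo) = 0].
Proof.
by split => f p; rewrite /dsum_op mxE /ix1 /ix2 /ix3 !mxtens_indexK /= ?split_l ?split_r.
Qed.

Lemma Uentry (C : numClosedFieldType) aO bO aI bI p1 p2 f1 f2 DP DF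
  (U : 'M[C]_(aI * bI * DF, DP * aO * bO)) (WP : 'M[C]_(DP, p1 + p2)) (WF : 'M[C]_(DF, f1 + f2))
  (U1 : 'M[C]_(aI * bI * f1, p1 * aO * bO)) (U2 : 'M[C]_(aI * bI * f2, p2 * aO * bO)) :
  U = ((1%:M *t 1%:M) *t WF) *m dsum_op U1 U2 *m ((adjmx WP *t 1%:M) *t 1%:M) ->
  forall ai bi f pp ao bo, U (ixx3 ai bi f) (ixx3 pp ao bo) =
    \sum_(f' < f1) \sum_(p' < p1)
        WF f (lshift f2 f') * U1 (ixx3 ai bi f') (ixx3 p' ao bo) * (WP pp (lshift p2 p'))^*
  + \sum_(f' < f2) \sum_(p' < p2)
        WF f (rshift f1 f') * U2 (ixx3 ai bi f') (ixx3 p' ao bo) * (WP pp (rshift p1 p'))^*.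
Proof.
move=> -> ai bi f pp ao bo; rewrite conj_entry sumr_add.
have [E1 E2 E3 E4] := dsumE U1 U2 ai bi ao bo.
congr (_ + _); apply: eq_bigr => f' _; rewrite sumr_add.
  rewrite [X in _ + X]big1 ?addr0; last by move=> p' _; rewrite E3 mulr0 mul0r.
  by apply: eq_bigr => p' _; rewrite E1 adjE.
rewrite [X in X + _]big1 ?add0r; last by move=> p' _; rewrite E4 mulr0 mul0r.
by apply: eq_bigr => p' _; rewrite E2 adjE.
Qed.

Lemma transfer (C : numClosedFieldType) aO bO aI bI p f DP DF
  (U : 'M[C]_(aI * bI * DF, DP * aO * bO)) (V : 'M[C]_(aI * bI * f, p * aO * bO))
  (A : 'M[C]_(DF, f)) (Bm : 'M[C]_(DP, p)) :
  (forall f1 f2, \sum_ff (A ff f1)^* * A ff f2 = dlt C f1 f2) ->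
  (forall pp pp', \sum_q Bm pp q * (Bm pp' q)^* = dlt C pp pp') ->
  (forall ai bi ff pp ao bo, U (ixx3 ai bi ff) (ixx3 pp ao bo) =
     \sum_(f' < f) \sum_(p' < p) A ff f' * V (ixx3 ai bi f') (ixx3 p' ao bo) * (Bm pp p')^*) ->
  (comb_AB V -> comb_AB U) /\ (comb_BA V -> comb_BA U).
Proof.
move=> HA HB HE.
pose W : 'M[C]_(aI * bI * f, DP * aO * bO) :=
  \matrix_(o, i) \sum_q V o (ixx3 q (ix2 i) (ix3 i)) * (Bm (ix1 i) q)^*.
have HW : forall ai bi ff pp ao bo, W (ixx3 ai bi ff) (ixx3 pp ao bo)
    = \sum_q V (ixx3 ai bi ff) (ixx3 q ao bo) * (Bm pp q)^*.
  by move=> *; rewrite /W mxE /ix1 /ix2 /ix3 !mxtens_indexK.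
have HU : forall ai bi ff pp ao bo, U (ixx3 ai bi ff) (ixx3 pp ao bo)
    = \sum_f1 A ff f1 * W (ixx3 ai bi f1) (ixx3 pp ao bo).
  move=> *; rewrite HE; apply: eq_bigr => f' _; rewrite HW mulr_sumr.
  by apply: eq_bigr => p' _; rewrite mulrA.
have [tAB tBA] := invF_AB HA HU.
by split => h; [apply: tAB; exact: (invP_AB HB HW h) | apply: tBA; exact: (invP_BA HB HW h)].
Qed.

Lemma isoA (C : numClosedFieldType) m n (A : 'M[C]_(m, n)) :
  (forall f1 f2, \sum_ff (A ff f1)^* * A ff f2 = dlt C f1 f2) -> adjmx A *m A = 1%:M.
Proof.
move=> H; apply/matrixP => i j; have := H i j; rewrite /dlt !mxE => <-.
apply: eq_bigr => k _.
by rewrite adjE.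
Qed.

Lemma isoB (C : numClosedFieldType) m n (B : 'M[C]_(m, n)) :
  (forall pp pp', \sum_q B pp q * (B pp' q)^* = dlt C pp pp') -> B *m adjmx B = 1%:M.
Proof.
move=> H; apply/matrixP => i j; have := H i j; rewrite /dlt !mxE => <-.
apply: eq_bigr => k _.
by rewrite adjE.
Qed.

Lemma unit_prod (C : numClosedFieldType) d (S0 A Bm T : 'M[C]_d) :
  unitary_mx S0 -> unitary_mx T -> adjmx A *m A = 1%:M -> Bm *m adjmx Bm = 1%:M ->
  unitary_mx (S0 *m adjmx Bm) /\ unitary_mx (A *m T).
Proof.
move=> [_ uS0] [_ uT] HA HB; split; apply: unitaryP; rewrite adjmxM.
  by rewrite adjmxK mulmxA -[Bm *m _ *m _]mulmxA uS0 mulmx1 HB.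
by rewrite mulmxA -[adjmx T *m _ *m _]mulmxA HA mulmx1 uT.
Qed.

Lemma ftransAB (C : numClosedFieldType) d (U V : 'M[C]_(d * d * d, d * d * d))
  (A Bm : 'M[C]_d) :
  (forall f1 f2, \sum_ff (A ff f1)^* * A ff f2 = dlt C f1 f2) ->
  (forall pp pp', \sum_q Bm pp q * (Bm pp' q)^* = dlt C pp pp') ->
  (forall ai bi ff pp ao bo, U (ixx3 ai bi ff) (ixx3 pp ao bo) =
     \sum_(f' < d) \sum_(p' < d) A ff f' * V (ixx3 ai bi f') (ixx3 p' ao bo) * (Bm pp p')^*) ->
  (0 < d)%N -> unitary_mx V -> comb_AB V ->
  exists (U0 U1 U2 : 'M[C]_d),
    [/\ unitary_mx U0, unitary_mx U1, unitary_mx U2 & U = (U0 *t U1) *t U2].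
Proof.
move=> HA HB HE dpos uV cV.
have [S0 [S1 [T [uS0 uS1 uT HV]]]] := factorAB dpos uV cV.
have [u0 u2] := unit_prod uS0 uT (isoA HA) (isoB HB).
exists (S0 *m adjmx Bm), S1, (A *m T); split => //.
apply/matrixP => o i.
case: (mxtens_indexP o) => o1 f; case: (mxtens_indexP o1) => ai bi.
case: (mxtens_indexP i) => i1 bo; case: (mxtens_indexP i1) => pp ao.
rewrite HE !tensmxE !mxE mulr_suml [in RHS]mulr_sumr; apply: eq_bigr => f' _.
rewrite [in RHS]mulr_suml; apply: eq_bigr => p' _.
by rewrite HV adjE; ring.
Qed.

Lemma ftransBA (C : numClosedFieldType) d (U V : 'M[C]_(d * d * d, d * d * d))
  (A Bm : 'M[C]_d) :
  (forall f1 f2, \sum_ff (A ff f1)^* * A ff f2 = dlt C f1 f2) ->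
  (forall pp pp', \sum_q Bm pp q * (Bm pp' q)^* = dlt C pp pp') ->
  (forall ai bi ff pp ao bo, U (ixx3 ai bi ff) (ixx3 pp ao bo) =
     \sum_(f' < d) \sum_(p' < d) A ff f' * V (ixx3 ai bi f') (ixx3 p' ao bo) * (Bm pp p')^*) ->
  (0 < d)%N -> unitary_mx V -> comb_BA V ->
  exists (V0 V1 V2 : 'M[C]_d),
    [/\ unitary_mx V0, unitary_mx V1, unitary_mx V2 & U = cross_op V0 V1 V2].
Proof.
move=> HA HB HE dpos uV cV.
have [S0 [S1 [T [uS0 uS1 uT HV]]]] := factorBA dpos uV cV.
have [u0 u2] := unit_prod uS0 uT (isoA HA) (isoB HB).
exists (S0 *m adjmx Bm), S1, (A *m T); split => //.
apply/matrixP => o i.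
case: (mxtens_indexP o) => o1 f; case: (mxtens_indexP o1) => ai bi.
case: (mxtens_indexP i) => i1 bo; case: (mxtens_indexP i1) => pp ao.
rewrite HE /cross_op !mxE /ix1 /ix2 /ix3 !mxtens_indexK /=.
rewrite [in RHS]mulr_sumr; apply: eq_bigr => f' _.
rewrite [in RHS]mulr_sumr [in RHS]mulr_suml; apply: eq_bigr => p' _.
by rewrite HV adjE; ring.
Qed.

Definition redP (C : numClosedFieldType) aO bO aI bI p f DP DF
  (U : 'M[C]_(aI * bI * DF, DP * aO * bO)) (V : 'M[C]_(aI * bI * f, p * aO * bO)) :=
  exists (A : 'M[C]_(DF, f)) (Bm : 'M[C]_(DP, p)),
  [/\ (forall f1 f2, \sum_ff (A ff f1)^* * A ff f2 = dlt C f1 f2),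
      (forall pp pp', \sum_q Bm pp q * (Bm pp' q)^* = dlt C pp pp') &
      (forall ai bi ff pp ao bo, U (ixx3 ai bi ff) (ixx3 pp ao bo) =
     \sum_(f' < f) \sum_(p' < p) A ff f' * V (ixx3 ai bi f') (ixx3 p' ao bo) * (Bm pp p')^*)].

Lemma reduce_l (C : numClosedFieldType) aO bO aI bI p1 p2 f1 f2 DP DF
  (U : 'M[C]_(aI * bI * DF, DP * aO * bO)) (WP : 'M[C]_(DP, p1 + p2)) (WF : 'M[C]_(DF, f1 + f2))
  (U1 : 'M[C]_(aI * bI * f1, p1 * aO * bO)) (U2 : 'M[C]_(aI * bI * f2, p2 * aO * bO)) :
  p2 = 0%N -> f2 = 0%N -> unitary_mx WP -> unitary_mx WF ->
  U = ((1%:M *t 1%:M) *t WF) *m dsum_op U1 U2 *m ((adjmx WP *t 1%:M) *t 1%:M) ->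
  redP U U1.
Proof.
move=> e1 e2 [uP _] [_ uF] EU; subst p2 f2.
exists (\matrix_(f, f') WF f (lshift 0 f')), (\matrix_(pp, q) WP pp (lshift 0 q)); split.
- move=> f1' f2'; have := congr1 (fun M : 'M_(f1 + 0) => M (lshift 0 f1') (lshift 0 f2')) uF.
  rewrite /= !mxE eq_shift /dlt => <-; apply: eq_bigr => k _; by rewrite adjE !mxE.
- move=> pp pp'; have := congr1 (fun M : 'M_DP => M pp pp') uP.
  rewrite /= !mxE /dlt => <-; rewrite sumr_add big_ord0 addr0; apply: eq_bigr => k _.
  by rewrite adjE !mxE.
move=> ai bi ff pp ao bo; rewrite (Uentry EU) big_ord0 addr0.
apply: eq_bigr => f' _; apply: eq_bigr => p' _; by rewrite !mxE.
Qed.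

Lemma reduce_r (C : numClosedFieldType) aO bO aI bI p1 p2 f1 f2 DP DF
  (U : 'M[C]_(aI * bI * DF, DP * aO * bO)) (WP : 'M[C]_(DP, p1 + p2)) (WF : 'M[C]_(DF, f1 + f2))
  (U1 : 'M[C]_(aI * bI * f1, p1 * aO * bO)) (U2 : 'M[C]_(aI * bI * f2, p2 * aO * bO)) :
  p1 = 0%N -> f1 = 0%N -> unitary_mx WP -> unitary_mx WF ->
  U = ((1%:M *t 1%:M) *t WF) *m dsum_op U1 U2 *m ((adjmx WP *t 1%:M) *t 1%:M) ->
  redP U U2.
Proof.
move=> e1 e2 [uP _] [_ uF] EU; subst p1 f1.
exists (\matrix_(f, f') WF f (rshift 0 f')), (\matrix_(pp, q) WP pp (rshift 0 q)); split.
- move=> f1' f2'; have := congr1 (fun M : 'M_(0 + f2) => M (rshift 0 f1') (rshift 0 f2')) uF.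
  rewrite /= !mxE eq_shift /dlt => <-; apply: eq_bigr => k _; by rewrite adjE !mxE.
- move=> pp pp'; have := congr1 (fun M : 'M_DP => M pp pp') uP.
  rewrite /= !mxE /dlt => <-; rewrite sumr_add big_ord0 add0r; apply: eq_bigr => k _.
  by rewrite adjE !mxE.
move=> ai bi ff pp ao bo; rewrite (Uentry EU) big_ord0 add0r.
apply: eq_bigr => f' _; apply: eq_bigr => p' _; by rewrite !mxE.
Qed.

Definition gidx d (j : 'I_(2 * d)) : 'I_(d + d) :=
  if val (@mxtens_unindex 2 d j).1 == 0%N then lshift d (@mxtens_unindex 2 d j).2
  else rshift d (@mxtens_unindex 2 d j).2.

Definition c0 : 'I_2 := @Ordinal 2 0 isT.
Definition c1 : 'I_2 := @Ordinal 2 1 isT.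

Lemma sum2 (C : numClosedFieldType) (F : 'I_2 -> C) : \sum_(c < 2) F c = F c0 + F c1.
Proof. by rewrite big_ord_recl big_ord1; congr (F _ + F _); apply: val_inj. Qed.

Lemma gidx0 d t : gidx (@mxtens_index 2 d (c0, t)) = lshift d t.
Proof. by rewrite /gidx mxtens_indexK. Qed.
Lemma gidx1 d t : gidx (@mxtens_index 2 d (c1, t)) = rshift d t.
Proof. by rewrite /gidx mxtens_indexK. Qed.

Lemma gidx_eq d (j j' : 'I_(2 * d)) : (gidx j == gidx j') = (j == j').
Proof.
case: (mxtens_indexP j) => c t; case: (mxtens_indexP j') => c' t'.
rewrite idx_eq.
have Hc : forall c : 'I_2, c = c0 \/ c = c1.
  by case=> [[|[|k]] Hk] //; [left|right]; apply: val_inj.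
have [->|->] := Hc c; have [->|->] := Hc c';
  by rewrite ?gidx0 ?gidx1 eq_shift.
Qed.

Lemma ctrlE (C : numClosedFieldType) d (U0 U1 U2 V0 V1 V2 : 'M[C]_d) ai bi ao bo c t c' t' :
  ctrl_op U0 U1 U2 V0 V1 V2 (ixx3 ai bi (@mxtens_index 2 d (c, t)))
                            (ixx3 (@mxtens_index 2 d (c', t')) ao bo)
  = ((val c' == 0%N) && (val c == 0%N))%:R * (U0 ai t' * U1 bi ao * U2 t bo)
  + ((val c' == 1%N) && (val c == 1%N))%:R * (V0 bi t' * V1 ai bo * V2 t ao).
Proof. by rewrite /ctrl_op mxE /jx1 /jx2 /ix1 /ix2 /ix3 !mxtens_indexK. Qed.

Lemma ctrl_entry (C : numClosedFieldType) d (WP WF : 'M[C]_(2 * d, d + d))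
  (S0 S1 T V0 V1 V2 : 'M[C]_d) ai bi f pp ao bo :
  (((1%:M *t 1%:M) *t (\matrix_(p, j) WF p (gidx j) : 'M[C]_(2 * d, 2 * d)))
     *m ctrl_op S0 S1 T V0 V1 V2
     *m ((adjmx (\matrix_(p, j) WP p (gidx j) : 'M[C]_(2 * d, 2 * d)) *t 1%:M) *t 1%:M))
    (ixx3 ai bi f) (ixx3 pp ao bo)
  = \sum_(t < d) \sum_(t' < d)
        WF f (lshift d t) * (S0 ai t' * S1 bi ao * T t bo) * (WP pp (lshift d t'))^*
  + \sum_(t < d) \sum_(t' < d)
        WF f (rshift d t) * (V0 bi t' * V1 ai bo * V2 t ao) * (WP pp (rshift d t'))^*.
Proof.
rewrite conj_entry sum_tens sum2.
under eq_bigr do rewrite sum_tens sum2.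
under [X in _ + X]eq_bigr do rewrite sum_tens sum2.
rewrite !big_split /=.
under [X in _ + X + _ = _]eq_bigr do under eq_bigr do
  rewrite ctrlE /= ?mulr0n ?mul0r ?addr0 ?mulr0 ?mul0r.
under [X in _ + (X + _) = _]eq_bigr do under eq_bigr do
  rewrite ctrlE /= ?mulr0n ?mul0r ?addr0 ?mulr0 ?mul0r.
rewrite !big1_eq addr0 add0r.
congr (_ + _); apply: eq_bigr => t _; apply: eq_bigr => t' _;
  rewrite ctrlE /= !mxE ?gidx0 ?gidx1 /= ?mulr0n ?mulr1n ?mul0r ?mul1r ?addr0 ?add0r //;
  match goal with |- ?g => idtac g end.
Qed.

Lemma ctrl_case (C : numClosedFieldType) d (U : 'M[C]_(d * d * (2 * d), 2 * d * d * d))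
  (WP WF : 'M[C]_(2 * d, d + d)) (U1 U2 : 'M[C]_(d * d * d, d * d * d))
  (S0 S1 T V0 V1 V2 : 'M[C]_d) :
  unitary_mx WP -> unitary_mx WF ->
  U = ((1%:M *t 1%:M) *t WF) *m dsum_op U1 U2 *m ((adjmx WP *t 1%:M) *t 1%:M) ->
  (forall ai bi f pp ao bo, U1 (ixx3 ai bi f) (ixx3 pp ao bo) = S0 ai pp * S1 bi ao * T f bo) ->
  (forall ai bi f pp ao bo, U2 (ixx3 ai bi f) (ixx3 pp ao bo) = V0 bi pp * V1 ai bo * V2 f ao) ->
  exists WP' WF' : 'M[C]_(2 * d, 2 * d),
    [/\ unitary_mx WP', unitary_mx WF' &
        U = ((1%:M *t 1%:M) *t WF') *m ctrl_op S0 S1 T V0 V1 V2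
              *m ((adjmx WP' *t 1%:M) *t 1%:M)].
Proof.
move=> uP uF EU H1 H2.
have uni : forall W : 'M[C]_(2 * d, d + d), unitary_mx W ->
    unitary_mx (\matrix_(p, j) W p (gidx j) : 'M[C]_(2 * d, 2 * d)).
  move=> W [_ uW]; apply: unitaryP; apply/matrixP => j j'.
  have := congr1 (fun M : 'M_(d + d) => M (gidx j) (gidx j')) uW.
  rewrite /= !mxE gidx_eq => <-; apply: eq_bigr => p _.
  by rewrite !adjE !mxE.
exists (\matrix_(p, j) WP p (gidx j)), (\matrix_(p, j) WF p (gidx j)); split; try exact: uni.
apply/matrixP => o i.
case: (mxtens_indexP o) => o1 f; case: (mxtens_indexP o1) => ai bi.
case: (mxtens_indexP i) => i1 bo; case: (mxtens_indexP i1) => pp ao.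
rewrite (Uentry EU) ctrl_entry.
congr (_ + _); apply: eq_bigr => t _; apply: eq_bigr => t' _.
  by rewrite H1.
by rewrite H2.
Qed.

Lemma causal0 (C : numClosedFieldType) p f (U : 'M[C]_(0 * 0 * f, p * 0 * 0)) :
  p = 0%N -> causally_ordered U.
Proof.
move=> ep; subst p; left.
exists (fun _ _ _ _ _ _ _ _ => 0), (fun _ _ _ _ => 0); split.
- by move=> pp [].
- by move=> pp [].
- by move=> [].
Qed.

Unset Implicit Arguments.

Theorem corollary5 (C : numClosedFieldType) (d D : nat)
    (U : 'M[C]_(d * d * D, D * d * d)) :
  unitary_mx U -> dsum_pure_combs U ->
  (D = d ->
     causally_ordered U /\
     ((exists (U0 : 'M[C]_(d, D)) (U1 : 'M[C]_(d, d)) (U2 : 'M[C]_(D, d)),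
         [/\ unitary_mx U0, unitary_mx U1, unitary_mx U2 & U = (U0 *t U1) *t U2])
      \/
      (exists (V0 : 'M[C]_(d, D)) (V1 : 'M[C]_(d, d)) (V2 : 'M[C]_(D, d)),
         [/\ unitary_mx V0, unitary_mx V1, unitary_mx V2 & U = cross_op V0 V1 V2])))
  /\
  (D = (2 * d)%N ->
     causally_ordered U \/
     exists (WP WF : 'M[C]_(D, 2 * d)) (U0 U1 U2 V0 V1 V2 : 'M[C]_d),
       [/\ unitary_mx WP, unitary_mx WF,
           [/\ unitary_mx U0, unitary_mx U1 & unitary_mx U2],
           [/\ unitary_mx V0, unitary_mx V1 & unitary_mx V2] &
           U = ((1%:M *t 1%:M) *t WF) *m ctrl_op U0 U1 U2 V0 V1 V2
                 *m ((adjmx WP *t 1%:M) *t 1%:M)]).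
Proof.
move=> uU [p1 [p2 [f1 [f2 [WP [WF [U1 [U2 [uWP uWF [uU1 cU1] [uU2 cU2] EU]]]]]]]]].
case: (posnP d) => [d0 | dpos].
  subst d; split => eD.
    subst D; split; first exact: causal0.
    left; exists 1%:M, 1%:M, 1%:M; split; try exact: unitary1.
    apply/matrixP => -[i Hi] j; exfalso; move: Hi; by rewrite !muln0.
  by left; apply: causal0; rewrite eD.
have ePD := unitary_dim uWP.
have ef1 : f1 = p1.
  have := unitary_dim uU1 => /eqP.
  rewrite -[(p1 * d * d)%N]mulnA [(p1 * (d * d))%N]mulnC eqn_pmul2l ?muln_gt0 ?dpos //.
  by move/eqP.
have ef2 : f2 = p2.
  have := unitary_dim uU2 => /eqP.
  rewrite -[(p2 * d * d)%N]mulnA [(p2 * (d * d))%N]mulnC eqn_pmul2l ?muln_gt0 ?dpos //.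
  by move/eqP.
have hp1 : (0 < p1)%N -> (d <= p1)%N.
  move=> p1pos; case: cU1 => R2 [R1 [H1 _ _]].
  have x0 : 'I_(p1 * d) by exists 0%N; rewrite muln_gt0 p1pos dpos.
  by rewrite -ef1; apply: (lemA x0 (orthoAB uU1.2) (condAB H1)).
have hp2 : (0 < p2)%N -> (d <= p2)%N.
  move=> p2pos; case: cU2 => R2 [R1 [H1 _ _]].
  have x0 : 'I_(p2 * d) by exists 0%N; rewrite muln_gt0 p2pos dpos.
  by rewrite -ef2; apply: (lemA x0 (orthoBA uU2.2) (condBA H1)).
split => eD; move: ePD; subst D => ePD.
  have [p20|p2pos] := posnP p2.
    subst p2; subst f2.
    have e1 : p1 = d by rewrite ePD addn0.
    subst p1; subst f1.
    have [A [Bm [HA HB HE]]] := reduce_l (erefl 0%N) (erefl 0%N) uWP uWF EU.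
    have [tAB _] := transfer HA HB HE.
    split; first by left; apply: tAB.
    by left; apply: (ftransAB HA HB HE dpos uU1 cU1).
  have p10 : p1 = 0%N.
    case: (posnP p1) => // p1pos; have := hp1 p1pos; have := hp2 p2pos; lia.
  subst p1; subst f1.
  have e2 : p2 = d by rewrite ePD.
  subst p2; subst f2.
  have [A [Bm [HA HB HE]]] := reduce_r (erefl 0%N) (erefl 0%N) uWP uWF EU.
  have [_ tBA] := transfer HA HB HE.
  split; first by right; apply: tBA.
  by right; apply: (ftransBA HA HB HE dpos uU2 cU2).
have [p20|p2pos] := posnP p2.
  subst p2; subst f2.
  have [A [Bm [HA HB HE]]] := reduce_l (erefl 0%N) (erefl 0%N) uWP uWF EU.
  have [tAB _] := transfer HA HB HE.
  by left; left; apply: tAB.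
have [p10|p1pos] := posnP p1.
  subst p1; subst f1.
  have [A [Bm [HA HB HE]]] := reduce_r (erefl 0%N) (erefl 0%N) uWP uWF EU.
  have [_ tBA] := transfer HA HB HE.
  by left; right; apply: tBA.
have e1 : p1 = d by have := hp1 p1pos; have := hp2 p2pos; lia.
have e2 : p2 = d by have := hp1 p1pos; have := hp2 p2pos; lia.
subst p1 p2; subst f1 f2.
have [S0 [S1 [T [uS0 uS1 uT H1]]]] := factorAB dpos uU1 cU1.
have [V0 [V1 [V2 [uV0 uV1 uV2 H2]]]] := factorBA dpos uU2 cU2.
have [WP' [WF' [uP uF EU']]] := ctrl_case uWP uWF EU H1 H2.
by right; exists WP', WF', S0, S1, T, V0, V1, V2; split.
Qed.
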